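(* Let $p\ge 1$ and $q\ge 0$ be integers and let $u$ be the unique integer in the interval $[p,p+q]$ maximizing $v_2(u)$. Then $$v_2\Big(\sum_{i=0}^{q}\frac{\binom{q}{i}}{p+i}\Big)=v_2\Big(\frac{\binom{q}{u-p}}{u}\Big).$$
   Context: For a nonzero rational number $x=2^m a/b$ with $a,b$ odd integers, $v_2(x)=m$ is its $2$-adic valuation. *)

(* Defs.v *)
From mathcomp Require Import all_boot all_order all_algebra.
Set Implicit Arguments. Unset Strict Implicit. Unset Printing Implicit Defensive.
Import Order.TTheory GRing.Theory Num.Theory.
Local Open Scope ring_scope.

(* 2-adic valuation of a rational number x = 2^m a/b (a, b odd):
   v2 x = m.  Convention v2 0 = 0 (never used on 0 in the main theorem). *)
Definition v2 (x : rat) : int :=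
  (Posz (logn 2 `|numq x|%N) - Posz (logn 2 `|denq x|%N))%R.

(* Main.v *)
Require Import Defs.
From mathcomp Require Import all_boot all_order all_algebra.
From mathcomp Require Import zify ring lra.
Import Order.TTheory GRing.Theory Num.Theory.


Lemma logn_lt k t : (0 < t)%N -> (t < 2 ^ k)%N -> (logn 2 t < k)%N.
Proof.
move=> t0 tk; rewrite -(ltn_exp2l _ _ (isT : (1 < 2)%N)).
apply: leq_ltn_trans tk; apply: dvdn_leq => //; exact: pfactor_dvdnn.
Qed.

Lemma P1 k u t : (2 ^ k %| u)%N -> (0 < t)%N -> (t < 2 ^ k)%N ->
  logn 2 (u + t) = logn 2 t.
Proof.
move=> ku t0 tk; have ak := @logn_lt k t t0 tk; set a := logn 2 t in ak *.
have ut0 : (0 < u + t)%N by rewrite addn_gt0 t0 orbT.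
have au : (2 ^ a %| u)%N by apply: dvdn_trans ku; apply: dvdn_exp2l; exact: ltnW.
have h1 : (a <= logn 2 (u + t))%N.
  by rewrite -pfactor_dvdn // dvdn_add // pfactor_dvdnn.
have h2 : ~~ (a.+1 <= logn 2 (u + t))%N.
  rewrite -pfactor_dvdn // dvdn_addr; last by apply: dvdn_trans ku; exact: dvdn_exp2l.
  by rewrite pfactor_dvdn // ltnn.
lia.
Qed.

Lemma P2 k u t : (2 ^ k %| u)%N -> (0 < t)%N -> (t < 2 ^ k)%N -> (t < u)%N ->
  logn 2 (u - t) = logn 2 t.
Proof.
move=> ku t0 tk tu; have ak := @logn_lt k t t0 tk; set a := logn 2 t in ak *.
have ut0 : (0 < u - t)%N by rewrite subn_gt0.
have au : (2 ^ a %| u)%N by apply: dvdn_trans ku; apply: dvdn_exp2l; exact: ltnW.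
have h1 : (a <= logn 2 (u - t))%N.
  by rewrite -pfactor_dvdn // dvdn_sub // pfactor_dvdnn.
have h2 : ~~ (a.+1 <= logn 2 (u - t))%N.
  rewrite -pfactor_dvdn //; apply/negP => H.
  have au1 : (2 ^ a.+1 %| u)%N by apply: dvdn_trans ku; exact: dvdn_exp2l.
  have : (2 ^ a.+1 %| u - (u - t))%N by rewrite dvdn_sub.
  rewrite subKn; last exact: ltnW.
  by rewrite pfactor_dvdn // ltnn.
lia.
Qed.

Lemma Q1 k u m : (2 ^ k %| u)%N -> (m < 2 ^ k)%N ->
  logn 2 (u + m)`! = (logn 2 u`! + logn 2 m`!)%N.
Proof.
move=> ku; elim: m => [|m IH] mk; first by rewrite addn0 fact0 logn1 addn0.
rewrite addnS !factS !lognM ?fact_gt0 // IH ?(ltnW mk) //.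
rewrite -addnS (@P1 k u m.+1 ku) //; lia.
Qed.

Lemma Q2 k u j : (2 ^ k %| u)%N -> (j < 2 ^ k)%N -> (j < u)%N ->
  logn 2 (u.-1)`! = (logn 2 (u.-1 - j)`! + logn 2 j`!)%N.
Proof.
move=> ku; elim: j => [|j IH] jk ju; first by rewrite subn0 fact0 logn1 addn0.
have E : (u.-1 - j = (u.-1 - j.+1).+1)%N by lia.
rewrite IH ?(ltnW jk) ?(ltnW ju) // E !factS !lognM ?fact_gt0 //.
have -> : (u.-1 - j.+1).+1 = u - j.+1 by lia.
rewrite (@P2 k u j.+1 ku) //; lia.
Qed.

Local Open Scope ring_scope.



Lemma v2_frac (n : int) (d : nat) : n != 0 -> (0 < d)%N ->
  v2 (n%:~R / d%:R) = (logn 2 `|n|)%:Z - (logn 2 d)%:Z.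
Proof.
move=> n0 d0; set x : rat := _ / _.
have dR : (d%:R : rat) != 0 by rewrite pnatr_eq0 -lt0n.
have x0 : x != 0 by rewrite /x mulf_neq0 ?invr_eq0 // intr_eq0.
have H : numq x * d%:Z = n * denq x.
  apply: (@intr_inj rat); rewrite !rmorphM /= numqE /x.
  rewrite -mulrA [_ * d%:Z%:~R]mulrC mulrA; congr (_ * _).
  by rewrite -mulrA pmulrn mulVf ?mulr1 //.
have nq0 : numq x != 0 by rewrite numq_eq0.
have /(congr1 absz) := H; rewrite !abszM /= => H'.
have := congr1 (logn 2) H'.
rewrite !lognM ?absz_gt0 ?denq_gt0 // => E.
rewrite /v2 -/x; lia.
Qed.



Definition Sf (p q : nat) : rat := \sum_(0 <= i < q.+1) ('C(q, i))%:R / (p + i)%:R.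

Lemma sumC n : \sum_(0 <= i < n.+1) ('C(n,i)%:R : rat) = 2 ^+ n.
Proof.
rewrite big_mkord -[2]/(1 + 1 : rat) exprDn.
apply: eq_bigr => i _; by rewrite !expr1n mulr1.
Qed.

Lemma Sf_rec p q : (0 < p)%N ->
  p%:R * Sf p q.+1 + q.+1%:R * Sf p.+1 q = 2 ^+ q.+1.
Proof.
move=> p0.
rewrite /Sf big_nat_recl // -sumC [in RHS]big_nat_recl // !mulr_sumr mulrDr -addrA.
congr (_ + _).
  by rewrite addn0 !bin0 mulrCA mulfV ?mulr1 // pnatr_eq0 -lt0n.
rewrite big_distrr -big_split /=; apply: eq_bigr => i _.
have E : (q.+1 * 'C(q, i) = i.+1 * 'C(q.+1, i.+1))%N by rewrite -mul_bin_diag.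
rewrite !mulrA -[q.+1%:R * _]natrM E addSnnS.
by rewrite natrM -mulrDl -mulrDl -natrD mulrAC mulfV ?mul1r // pnatr_eq0 addnS.
Qed.



Definition A (n q : nat) : int := \sum_(0 <= r < q.+1) (-2) ^+ r * ('C(n, r))%:Z.
Definition T (p q : nat) : rat := ((-1) ^+ q * A (p + q) q)%:~R / (p * 'C(p + q, p))%:R.

Lemma A_recR n q : (A n q.+1)%:~R = (A n q)%:~R + (-2) ^+ q.+1 * ('C(n, q.+1))%:R :> rat.
Proof.
rewrite /A big_nat_recr //= rmorphD /= rmorphM /= rmorphXn /= rmorphN /=.
by [].
Qed.

Lemma T_rec p q : (0 < p)%N ->
  p%:R * T p q.+1 + q.+1%:R * T p.+1 q = 2 ^+ q.+1.
Proof.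
move=> p0; rewrite /T addSnnS; set n := (p + q.+1)%N.
have Hb : (p.+1 * 'C(n, p.+1) = q.+1 * 'C(n, p))%N.
  by rewrite mul_bin_left /n; congr (_ * _)%N; lia.
have Hc : 'C(n, q.+1) = 'C(n, p).
  by rewrite -bin_sub /n ?leq_addl //; congr 'C(_, _); lia.
have c0 : ('C(n, p)%:R : rat) != 0 by rewrite pnatr_eq0 -lt0n bin_gt0 /n leq_addr.
rewrite Hb !natrM !rmorphM /= A_recR Hc !rmorphXn /= !rmorphN /= rmorph1.
have p0' : (p%:R : rat) != 0 by rewrite pnatr_eq0 -lt0n.
have q0 : (q.+1%:R : rat) != 0 by rewrite pnatr_eq0.
set c := ('C(n, p)%:R : rat); set a := (A n q)%:~R : rat.
rewrite !exprS.
have -> : (-2 : rat) ^+ q = (-1) ^+ q * 2 ^+ q by rewrite -exprMn mulN1r.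
set s := (-1 : rat) ^+ q.
have ss : s * s = 1 by rewrite /s -exprMn mulN1r opprK expr1n.
have K (x y z : rat) : x != 0 -> z != 0 -> x * (y / (x * z)) = y / z.
  by move=> x0 z0; field; apply/andP.
rewrite !K // -mulrDl.
have -> : -1 * s * (a + -2 * (s * 2 ^+ q) * c) + s * a = 2 * 2 ^+ q * c * (s * s) by ring.
by rewrite ss mulr1 mulfK.
Qed.

Lemma Sf_T q : forall p, (0 < p)%N -> Sf p q = T p q.
Proof.
elim: q => [|q IH] p p0.
  rewrite /Sf /T big_nat1 /A big_nat1 !addn0 !bin0 binn expr0 !mul1r muln1.
  by [].
have p0' : (p%:R : rat) != 0 by rewrite pnatr_eq0 -lt0n.
apply: (mulfI p0'); apply: (addrI (q.+1%:R * T p.+1 q)).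
by rewrite [RHS]addrC T_rec // -IH // addrC Sf_rec.
Qed.

Lemma A_odd n q : ~~ (2 %| A n q)%Z.
Proof.
rewrite /A big_nat_recl // expr0 bin0 mul1r.
have -> : \sum_(0 <= i < q) (-2) ^+ i.+1 * ('C(n, i.+1))%:Z
          = 2 * (- \sum_(0 <= i < q) (-2) ^+ i * ('C(n, i.+1))%:Z).
  rewrite mulrN -mulNr big_distrr /=; apply: eq_bigr => i _.
  by rewrite exprS mulrA.
by rewrite rpredDr ?dvdz1 // dvdz_mulr.
Qed.

Theorem mainTheorem12 (p q u : nat) :
  (1 <= p)%N ->
  (p <= u <= p + q)%N ->
  (forall w : nat, (p <= w <= p + q)%N -> w != u -> (logn 2 w < logn 2 u)%N) ->
  let S : rat := \sum_(0 <= i < q.+1) ('C(q, i))%:R / (p + i)%:R in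
  S != 0 /\ v2 S = v2 (('C(q, u - p))%:R / u%:R).
Proof.
move=> hp /andP[pu uq] hmax S.
have u0 : (0 < u)%N by apply: leq_trans hp pu.
have ku : (2 ^ (logn 2 u) %| u)%N by exact: pfactor_dvdnn.
have k0 : (0 < 2 ^ (logn 2 u))%N by rewrite expn_gt0.
set k := logn 2 u in ku k0 hmax *.
set j := (u - p)%N; set m := (q - j)%N.
have jk : (j < 2 ^ k)%N.
  rewrite ltnNge; apply/negP => H.
  have w1 : (p <= u - 2 ^ k <= p + q)%N by apply/andP; split; lia.
  have w2 : (u - 2 ^ k != u)%N by apply/eqP; lia.
  have := hmax _ w1 w2.
  have : (k <= logn 2 (u - 2 ^ k))%N.
    by rewrite -pfactor_dvdn ?dvdn_sub ?dvdnn //; lia.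
  lia.
have mk : (m < 2 ^ k)%N.
  rewrite ltnNge; apply/negP => H.
  have w1 : (p <= u + 2 ^ k <= p + q)%N by apply/andP; split; lia.
  have w2 : (u + 2 ^ k != u)%N by apply/eqP; lia.
  have := hmax _ w1 w2.
  have : (k <= logn 2 (u + 2 ^ k))%N.
    by rewrite -pfactor_dvdn ?dvdn_add ?dvdnn //; lia.
  lia.
have ST : S = T p q by exact: Sf_T.
have B0 : (0 < p * 'C(p + q, p))%N by rewrite muln_gt0 bin_gt0 leq_addr andbT.
have A0 : A (p + q) q != 0.
  by apply: contraNneq (A_odd (p + q) q) => ->; rewrite dvdz0.
have lA : logn 2 (absz ((-1) ^+ q * A (p + q) q)) = 0%N.
  rewrite abszMsign; have := A_odd (p + q) q; rewrite dvdzE /=.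
  have := @pfactor_dvdn 2 1 `|A (p + q) q|%N isT; rewrite absz_gt0 A0 => /(_ isT).
  rewrite expn1 => ->; lia.
have Cq0 : (0 < 'C(q, j))%N by rewrite bin_gt0; lia.
have F : (p * 'C(p + q, p) * 'C(q, j) * ((p.-1)`! * (j`! * m`!)) = (p + q)`!)%N.
  have e1 : (p * (p.-1)`! = p`!)%N by rewrite -[in RHS](prednK hp) factS prednK.
  have e2 : ('C(q, j) * (j`! * m`!) = q`!)%N by rewrite bin_fact //; lia.
  have e3 : ('C(p + q, p) * (p`! * q`!) = (p + q)`!)%N.
    by rewrite -[in q`!](addKn p q) bin_fact // leq_addr.
  rewrite -e3 -e2 -e1; ring.
have G : logn 2 (p + q)`! = (logn 2 u + logn 2 (p.-1)`! + logn 2 j`! + logn 2 m`!)%N.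
  have -> : (p + q = u + m)%N by lia.
  rewrite (@Q1 k u m ku mk).
  have -> : u`! = (u * (u.-1)`!)%N by rewrite -[in LHS](prednK u0) factS prednK.
  rewrite lognM ?fact_gt0 // (@Q2 k u j ku jk); last by lia.
  have -> : (u.-1 - j = p.-1)%N by lia.
  lia.
have H := congr1 (logn 2) F.
rewrite !lognM ?muln_gt0 ?fact_gt0 ?bin_gt0 ?leq_addr //= in H; try lia.
split.
  rewrite ST /T mulf_neq0 // ?invr_eq0 ?pnatr_eq0 -?lt0n // intr_eq0 mulf_neq0 //.
  by rewrite signr_eq0.
rewrite ST /T v2_frac //; last by rewrite mulf_neq0 // signr_eq0.
have -> : ('C(q, u - p)%:R : rat) = ('C(q, j)%:Z)%:~R by [].
rewrite v2_frac // ?lA /=; last by rewrite -lt0n.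
rewrite lognM ?bin_gt0 ?leq_addr //.
lia.
Qed.
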